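(* There exists an absolute constant $C>0$ such that the following holds. Let $B$ be a finite set of consecutive integers, let $1\le m\le|B|$ and let $I=(i_1,\dots,i_m)\subseteq B$ be an increasing sequence of integers. For an integer $s\ge1$ define $$\mathcal{J}'_{s,I}=\Big\{(j_1,\dots,j_m)\in\mathbb{Z}^m: \sum_{k=1}^m j_k=s,\ j_k\ge 0\text{ for all }k,\ j_{k+1}-j_k\le i_{k+1}-i_k\text{ for all }1\le k\le m-1\Big\}.$$ Then $$|\mathcal{J}'_{s,I}|\le\left(\frac{C}{m^2}\right)^{m-1}\left(s^{m-1}+(m|B|)^{m-1}\right).$$ *)

(* Defs.v *)
From HB Require Import structures.
From mathcomp Require Import all_boot all_order all_algebra.
From Stdlib Require Rdefinitions.
From mathcomp Require Import Rstruct.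
Set Implicit Arguments. Unset Strict Implicit. Unset Printing Implicit Defensive.
Import Order.TTheory GRing.Theory Num.Theory.
Local Open Scope ring_scope.

Definition blockB (a : int) (n : nat) : seq int := [seq a + i%:Z | i <- iota 0 n].

Definition incr_in (a : int) (n m : nat) (I : seq int) : Prop :=
  size I = m /\ sorted <%R I /\ all (fun x => x \in blockB a n) I.

(* Since j_k >= 0 and the sum is s, every
   j_k lies in {0,...,s}, so we enumerate inside m.-tuple 'I_s.+1. *)
Definition Jprime (m s : nat) (I : seq int) : {set m.-tuple 'I_s.+1} :=
  [set j : m.-tuple 'I_s.+1 |
     ((\sum_(k < m) (tnth j k : nat))%N == s) &&
     [forall k : 'I_m, (k.+1 < m)%N ==>
        (let js := [seq (val x : nat)%:Z | x <- (j : seq (ordinal s.+1))] in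
         nth 0 js k.+1 - nth 0 js k <= nth 0 I k.+1 - nth 0 I k)]].

(* Main.v *)
Require Import Defs.
From HB Require Import structures.
From mathcomp Require Import all_boot all_order all_algebra.
From Stdlib Require Rdefinitions.
From mathcomp Require Import Rstruct.
Import Order.TTheory GRing.Theory Num.Theory.
Local Open Scope ring_scope.
Module KeyR.
From Stdlib Require Import Reals Lra Lia.
Local Open Scope R_scope.
Lemma exp_pow_n y (n : nat) : exp y ^ n = exp (INR n * y).
Proof. induction n as [|n IH]. simpl. rewrite Rmult_0_l exp_0. reflexivity.
  rewrite S_INR. simpl pow. rewrite IH. rewrite <- exp_plus. f_equal. ring. Qed.
Lemma key_R (n : nat) : Nat.le 1 n -> Nat.le (Nat.pow (Nat.add n 1) n) (Nat.mul 3 (Nat.pow n n)).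
Proof. intros Hn. apply INR_le. rewrite mult_INR !pow_INR plus_INR.
  assert (Hx : 0 < INR n) by (apply lt_0_INR; lia).
  replace (INR n + INR 1) with (INR n * (1 + / INR n)) by (simpl; field; lra).
  rewrite Rpow_mult_distr.
  assert (H1 : (1 + / INR n) ^ n <= 3).
  { apply Rle_trans with (exp (/ INR n) ^ n).
    apply pow_incr. split. assert (0 < / INR n) by (apply Rinv_0_lt_compat; lra). lra.
    apply exp_ineq1_le.
    rewrite exp_pow_n. replace (INR n * / INR n) with 1 by (field; lra). apply exp_le_3. }
  assert (0 <= INR n ^ n) by (apply pow_le; lra).
  simpl (INR 3). nra. Qed.

End KeyR.
From mathcomp Require Import zify ring.
Set Implicit Arguments. Unset Strict Implicit. Unset Printing Implicit Defensive.

Section NatPart.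
Local Open Scope nat_scope.

Lemma bern y d k : y ^ k.+1 + d * k.+1 * y ^ k <= (y + d) ^ k.+1.
Proof.
elim: k => [|k IH]; first by rewrite !expn1 expn0 !muln1.
rewrite (expnS (y + d)) (expnS y k.+1).
move: IH; rewrite (expnS y k).
set p := y ^ k. set Q := (y + d) ^ k.+1 => IH.
have H := leq_mul (leqnn (y + d)) IH.
apply: leq_trans H. nia.
Qed.

Lemma telescope d k A X : d * X <= A ->
  \sum_(0 <= x < X.+1) d * k.+1 * (A - d * x) ^ k + (A - d * X) ^ k.+1 <= (A + d) ^ k.+1.
Proof.
elim: X => [|X IH] H.
  rewrite big_nat1 muln0 subn0 addnC; exact: bern.
rewrite big_nat_recr //=.
have H1 : d * X <= A by apply: leq_trans H; rewrite leq_mul2l leqnSn orbT.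
apply: leq_trans (IH H1).
have E : A - d * X = (A - d * X.+1) + d.
  rewrite mulnS; lia.
rewrite E -addnA leq_add2l addnC; exact: bern.
Qed.

Fixpoint Lp (m T : nat) : seq (seq nat) :=
  if m is m'.+1 then
    [seq x :: map (addn x) r | x <- iota 0 (T %/ m'.+1).+1, r <- Lp m' (T - m'.+1 * x)]
  else (if T == 0 then [:: [::]] else [::]).

Lemma Lp_S m T : Lp m.+1 T =
  [seq x :: map (addn x) r | x <- iota 0 (T %/ m.+1).+1, r <- Lp m (T - m.+1 * x)].
Proof. by []. Qed.

Lemma sumn_addmap x t : sumn (map (addn x) t) = size t * x + sumn t.
Proof. elim: t => //= y t ->; rewrite mulSn; lia. Qed.

Lemma Lp_mem m : forall T h, size h = m -> sorted leq h -> sumn h = T -> h \in Lp m T.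
Proof.
elim: m => [|m IH] T h.
  by case: h => //= _ _ <-.
case: h => // x t [St] Hs Hsum; rewrite Lp_S; simpl in Hs, Hsum.
have Hall : all (leq x) t := order_path_min leq_trans Hs.
have Hst : sorted leq t := path_sorted Hs.
set t' := map (subn^~ x) t.
have Et : t = map (addn x) t'.
  rewrite /t' -map_comp map_id_in // => z zt /=; rewrite subnKC //; exact: (allP Hall).
have St' : size t' = m by rewrite size_map.
have Ssum : T = m.+1 * x + sumn t'.
  by rewrite -Hsum {1}Et sumn_addmap St'; lia.
apply/flatten_mapP; exists x.
  rewrite mem_iota /= add0n ltnS leq_divRL //; lia.
apply/mapP; exists t'; last by rewrite -Et.
apply: IH => //.
  rewrite /t' sorted_map; apply: (sub_sorted _ Hst) => a b /= ab.
  exact: leq_sub2r.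
lia.
Qed.


Lemma size_Lp0 y : size (Lp 0 y) = (y == 0).
Proof. by case: y. Qed.

Lemma Lp1_size T : size (Lp 1 T) <= 1.
Proof.
rewrite Lp_S size_allpairs_dep sumnE big_map.
have -> : iota 0 (T %/ 1).+1 = index_iota 0 T.+1 by rewrite /index_iota subn0 divn1.
rewrite big_nat_recr //= big_nat_cond big1 ?add0n; last first.
  move=> i /andP[/andP[_ Hi] _]; rewrite size_Lp0 mul1n.
  by rewrite subn_eq0 leqNgt Hi.
by case: ifP.
Qed.

Variable key : forall n, 1 <= n -> (n + 1) ^ n <= 3 * n ^ n.

Lemma fac_step k : (k.+2 ^ 2) ^ k.+1 <= 9 * (k.+1 ^ 2) ^ k * (k.+2 * k.+1).
Proof.
have H := key (n := k.+1) isT. rewrite addn1 (expnS k.+1 k) in H.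
have E1 : (k.+2 ^ 2) ^ k.+1 = (k.+2 ^ k.+1) ^ 2 by rewrite -!expnM mulnC.
have E2 : (k.+1 ^ 2) ^ k = (k.+1 ^ k) ^ 2 by rewrite -!expnM mulnC.
rewrite E1 E2.
move: H; set P := k.+1 ^ k; set Q := k.+2 ^ k.+1 => H.
have H2 := leq_mul H H.
rewrite !expnS !expn0 !muln1.

apply: leq_trans H2 _.
have Hk : k.+1 <= k.+2 by [].
move: Hk; generalize k.+1 k.+2 => a b Hab.
have -> : 3 * (a * P) * (3 * (a * P)) = 9 * (P * P) * (a * a).
  by ring.
by rewrite leq_mul2l leq_mul2r Hab !orbT.
Qed.

Lemma Lp_size k : forall T, size (Lp k.+1 T) * (k.+1 ^ 2) ^ k <= 9 ^ k * (T + k.+1 ^ 2) ^ k.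
Proof.
elim: k => [|k IH] T.
  by rewrite !expn0 !muln1; apply: Lp1_size.
rewrite Lp_S size_allpairs_dep sumnE big_map big_distrl.
set X := T %/ k.+2.
set A := T + k.+1 ^ 2.
have HX : X * k.+2 <= T by rewrite /X leq_trunc_div.
apply: (@leq_trans (\sum_(x <- iota 0 X.+1) 9 ^ k.+1 * (k.+2 * k.+1 * (A - k.+2 * x) ^ k))).
  rewrite big_seq [X in _ <= X]big_seq; apply: leq_sum => x.

  rewrite mem_iota add0n ltnS => /andP[_ Hx].
  have Hx' : k.+2 * x <= T by rewrite mulnC; apply: leq_trans HX; rewrite leq_mul2r Hx orbT.
  apply: (leq_trans (leq_mul (leqnn _) (fac_step k))).
  have Hi := IH (T - k.+2 * x).
  have -> : A - k.+2 * x = T - k.+2 * x + k.+1 ^ 2 by rewrite /A; lia.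
  move: Hi; set S := size _; set P := (k.+1 ^ 2) ^ k; set Q := (_ + _) ^ k => Hi.
  rewrite expnS.
  have := leq_mul Hi (leqnn (9 * (k.+2 * k.+1))). nia.
rewrite -big_distrr leq_mul2l; apply/orP; right.
have Ht := @telescope k.+2 k A X.
have -> : iota 0 X.+1 = index_iota 0 X.+1 by rewrite /index_iota subn0.
have HdX : k.+2 * X <= A by rewrite mulnC; apply: leq_trans HX _; rewrite /A leq_addr.
apply: leq_trans (leq_trans (leq_addr _ _) (Ht HdX)) _.
rewrite leq_exp2r // /A -!addnA leq_add2l !expnS !expn0 !muln1; nia.
Qed.

End NatPart.

Section Inj.
Local Open Scope nat_scope.
Variables (m s : nat) (I : seq int).

Definition js (j : m.-tuple 'I_s.+1) : seq nat := map (fun x : 'I_s.+1 => (x : nat)) j.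
Definition cI k : nat := absz (nth 0%R I m.-1 - nth 0%R I k)%R.
Definition gseq j := [seq nth 0 (js j) k + cI k | k <- iota 0 m].
Definition hseq j := rev (gseq j).
Definition Tc := s + sumn [seq cI k | k <- iota 0 m].

Lemma size_js j : size (js j) = m.
Proof. by rewrite size_map size_tuple. Qed.

Lemma hseq_size j : size (hseq j) = m.
Proof. by rewrite size_rev size_map size_iota. Qed.

Lemma hseq_inj : injective hseq.
Proof.
move=> j1 j2 /(can_inj (@revK _)) E.
apply: val_inj; apply: (inj_map val_inj).
apply: (@eq_from_nth _ 0); first by rewrite !size_map !size_tuple.
rewrite size_map size_tuple => i Hi.
have := congr1 (fun l => nth 0 l i) E.
rewrite /gseq !(nth_map 0) ?size_iota // nth_iota // add0n.
by move/eqP; rewrite eqn_add2r => /eqP.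
Qed.

Lemma hseq_sum j : j \in Jprime m s I -> sumn (hseq j) = Tc.
Proof.
rewrite inE => /andP[/eqP Hs _].
rewrite /hseq sumn_rev /gseq /Tc !sumnE !big_map big_split /=.
congr (_ + _).
rewrite -Hs.
have -> : \sum_(k <- iota 0 m) nth 0 (js j) k = sumn (mkseq (nth 0 (js j)) m).
  by rewrite sumnE big_map.
rewrite -{1}(size_js j) mkseq_nth sumnE big_map big_tuple.
by [].
Qed.

Hypothesis HI : sorted <%R I.
Hypothesis HsI : size I = m.

Lemma Ile k : k < m -> (nth 0 I k <= nth 0 I m.-1)%R.
Proof.
move=> Hk.
case: (ltngtP k m.-1) => H.
- apply: ltW. have Htr : transitive (@Order.lt _ int) by move=> ???; apply: lt_trans.
  apply: (sorted_ltn_nth Htr 0 HI k m.-1) => //; rewrite inE HsI //.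
  by case: (m) Hk H.
- by move: Hk H; case: (m) => // m' /=; lia.
- by rewrite H.
Qed.

Lemma cI_eq k : k < m -> Posz (cI k) = (nth 0 I m.-1 - nth 0 I k)%R.
Proof. by move=> Hk; rewrite /cI gez0_abs // subr_ge0 Ile. Qed.

Lemma hseq_sorted j : j \in Jprime m s I -> sorted leq (hseq j).
Proof.
rewrite inE => /andP[_ /forallP Hc].
rewrite /hseq rev_sorted; apply/(sortedP 0) => i.
rewrite size_map size_iota => Hi.
have Hi' : i < m by apply: ltnW.
rewrite !(nth_map 0) ?size_iota // !nth_iota // !add0n.
have := Hc (Ordinal Hi'); rewrite /= Hi /=.
rewrite !(nth_map ord0) ?size_tuple //.
move=> H.
rewrite -lez_nat !PoszD !cI_eq //.
move: H; set a := (nat_of_ord _); set b := (nat_of_ord _).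
move=> H. rewrite -subr_ge0.
have -> : (b%:Z + (I`_m.-1 - I`_i) - (a%:Z + (I`_m.-1 - I`_i.+1)) = (I`_i.+1 - I`_i) - (a%:Z - b%:Z))%R by ring.
by rewrite subr_ge0.
Qed.

Lemma card_J : #|Jprime m s I| <= size (Lp m Tc).
Proof.
rewrite cardE -(size_map hseq); apply: uniq_leq_size.
  by rewrite (map_inj_uniq hseq_inj) enum_uniq.
move=> y /mapP[j]; rewrite mem_enum => Hj ->.
apply: Lp_mem; [exact: hseq_size | exact: hseq_sorted | exact: hseq_sum].
Qed.

Lemma sumn_bound (f : nat -> nat) r c : (forall x, x \in r -> f x <= c) ->
  sumn (map f r) <= size r * c.
Proof.
elim: r => //= x r IH H; rewrite mulSn leq_add ?H ?mem_head //.
by apply: IH => y yr; apply: H; rewrite inE yr orbT.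
Qed.

Lemma Tc_le a n : all (fun x => x \in blockB a n) I -> Tc <= s + m * n.
Proof.
move=> Hall; rewrite /Tc leq_add2l.
rewrite -{2}(size_iota 0 m); apply: sumn_bound => k; rewrite mem_iota add0n => /andP[_ Hk].
have Hm1 : m.-1 < m by case: (m) Hk.
have Hk' : k < size I by rewrite HsI.
have Hm' : m.-1 < size I by rewrite HsI.
have /mapP[p pn Ep] := allP Hall _ (mem_nth 0%R Hk').
have /mapP[q qn Eq] := allP Hall _ (mem_nth 0%R Hm').
rewrite mem_iota add0n in pn; rewrite mem_iota add0n in qn.
rewrite /cI Ep Eq -lez_nat abszE.
have -> : (a + q%:Z - (a + p%:Z) = q%:Z - p%:Z)%R by ring.
rewrite ler_norml; apply/andP; split; lia.
Qed.

End Inj.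

Section Final.
Local Open Scope nat_scope.

Lemma expn_pow x k : expn x k = Nat.pow x k.
Proof. by elim: k => //= k IH; rewrite expnS IH. Qed.

Lemma key n : 1 <= n -> (n + 1) ^ n <= 3 * n ^ n.
Proof.
move=> /ssrnat.leP Hn; apply/ssrnat.leP; rewrite !expn_pow; exact: KeyR.key_R.
Qed.

Lemma expn_mono x y k : x <= y -> x ^ k <= y ^ k.
Proof. by move=> H; elim: k => // k IH; rewrite !expnS leq_mul. Qed.

Lemma pow3 x y k : (x + 2 * y) ^ k <= 3 ^ k * (x ^ k + y ^ k).
Proof.
case: (leqP x y) => H.
  apply: (@leq_trans ((3 * y) ^ k)); first by apply: expn_mono; lia.
  by rewrite expnMn leq_mul2l leq_addl orbT.
apply: (@leq_trans ((3 * x) ^ k)); first by apply: expn_mono; lia.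
by rewrite expnMn leq_mul2l leq_addr orbT.
Qed.

Lemma main_nat a n k I s : k.+1 <= n -> incr_in a n k.+1 I ->
  #|Jprime k.+1 s I| * (k.+1 ^ 2) ^ k <= 27 ^ k * (s ^ k + (k.+1 * n) ^ k).
Proof.
move=> Hmn [HsI [Hsort Hall]].
have H1 := leq_mul (card_J s Hsort HsI) (leqnn ((k.+1 ^ 2) ^ k)).
have H2 := Lp_size key k (Tc k.+1 s I).
have H3 : Tc k.+1 s I + k.+1 ^ 2 <= s + 2 * (k.+1 * n).
  have := Tc_le s Hsort HsI Hall.
  have : k.+1 ^ 2 <= k.+1 * n by rewrite expnS expn1 leq_mul2l Hmn orbT.
  lia.
have H4 := pow3 s (k.+1 * n) k.
apply: (leq_trans H1); apply: (leq_trans H2).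
have -> : 27 ^ k = 9 ^ k * 3 ^ k by rewrite -expnMn.
rewrite -mulnA leq_mul2l; apply/orP; right.
exact: leq_trans (expn_mono k H3) H4.
Qed.

End Final.

Theorem lemma4p7 :
  exists C : Rdefinitions.R, 0 < C /\
  forall (a : int) (n m : nat) (I : seq int) (s : nat),
    (1 <= m)%N -> (m <= n)%N -> incr_in a n m I -> (1 <= s)%N ->
    (#|Jprime m s I|%:R : Rdefinitions.R) <=
      (C / (m%:R ^+ 2)) ^+ m.-1 * (s%:R ^+ m.-1 + (m%:R * n%:R) ^+ m.-1).
Proof.
exists 27%:R; split; first by rewrite ltr0n.
move=> a n [//|k] I s _ Hmn HI _ /=.
have NI := main_nat s Hmn HI.
have Hpos : 0 < (k.+1%:R ^+ 2) ^+ k :> Rdefinitions.R by rewrite !exprn_gt0 // ltr0n.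
rewrite -(ler_pM2r Hpos).
rewrite expr_div_n mulrAC divfK ?gt_eqF //.
rewrite -!natrX -!natrM -!natrX -natrD -!natrM ler_nat.
exact: NI.
Qed.
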